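(* Let $\alpha=(a_1,\dots,a_w)$ have $m$ nonempty horizontal lists, and let $a_i\in\mathbb{L}^m_\alpha$. Let $(a_{i_{m-1}},\dots,a_{i_0})$, with $a_{i_0}=a_i$, be any increasing subsequence of $\alpha$ of length $m$ ending at $a_i$. Then $$\mathrm{pos}(lm^{m-1}_\alpha(a_i))\le i_{m-1}\le \mathrm{pos}(un^{m-1}_\alpha(a_i)).$$ Consequently, among the longest increasing subsequences ending at $a_i$, maximum width is attained by one starting at $lm^{m-1}_\alpha(a_i)$, and minimum width by one starting at $un^{m-1}_\alpha(a_i)$.
   Context: Let $\alpha=(a_1,\dots,a_w)$ be a finite sequence of real numbers, with items identified by their positions; $\mathrm{pos}(a_j)=j$. Increasing subsequences are non-strict. $a_j$ is compatible with $a_i$ if $j<i$ and $a_j\le a_i$. $RL_\alpha(a)$ is the maximum length of an increasing subsequence ending at $a$. $a_j$ is a predecessor of $a_i$ if it is compatible with $a_i$ and $RL_\alpha(a_j)=RL_\alpha(a_i)-1$. The horizontal list $\mathbb{L}^t_\alpha$ is the list of items with rising length $t$, ordered by position. The up neighbor $un_\alpha(a_i)$ is the item $a_j$ with the largest $j<i$ and $RL_\alpha(a_j)=RL_\alpha(a_i)-1$. The leftmost child $lm_\alpha(a_i)$ is the predecessor of $a_i$ with smallest position. Iterates are defined by $f^0(a)=a$ and $f^k=f\circ f^{k-1}$. The width of a subsequence $(a_{j_1},\dots,a_{j_k})$ is $j_k-j_1$. *)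

(* Defs.v *)
From HB Require Import structures.
From mathcomp Require Import all_boot all_order all_algebra.
Set Implicit Arguments. Unset Strict Implicit. Unset Printing Implicit Defensive.
Import Order.TTheory GRing.Theory Num.Theory.

(* A sequence alpha = (a_1,...,a_w) is a function a : 'I_w -> R; the item at
   position j is identified with j itself (0-based positions). *)
Section Defs.
Variables (R : realFieldType) (w : nat) (a : 'I_w -> R).

Definition incr_set (S : {set 'I_w}) : bool :=
  [forall j in S, forall k in S, ((j < k)%N ==> (a j <= a k)%R)].

Definition RL (i : 'I_w) : nat :=
  \max_(S : {set 'I_w} | [&& incr_set S, i \in S & [forall j in S, (j <= i)%N]]) #|S|.

Definition compatible (j i : 'I_w) : bool := (j < i)%N && (a j <= a i)%R.

Definition is_pred (j i : 'I_w) : bool := compatible j i && (RL j == (RL i).-1).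

(* up neighbor: largest j < i with RL j = RL i - 1 (default: i itself if none) *)
Definition un (i : 'I_w) : 'I_w :=
  odflt i [pick j : 'I_w | [&& (j < i)%N, RL j == (RL i).-1 &
     [forall k : 'I_w, ((k < i)%N && (RL k == (RL i).-1)) ==> (k <= j)%N]]].

(* leftmost child: predecessor with smallest position (default: i itself if none) *)
Definition lm (i : 'I_w) : 'I_w :=
  odflt i [pick j : 'I_w | is_pred j i && [forall k : 'I_w, is_pred k i ==> (j <= k)%N]].

Definition incr_subseq (s : seq 'I_w) : bool :=
  sorted (fun x y : 'I_w => (x < y)%N) s && sorted (fun x y : 'I_w => (a x <= a y)%R) s.

End Defs.

Definition width (w : nat) (s : seq 'I_w) : nat :=
  match s with [::] => 0 | x :: t => (last x t - x)%N end.

(* Main.v *)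
Require Import Defs.
From HB Require Import structures.
From mathcomp Require Import all_boot all_order all_algebra.
Set Implicit Arguments. Unset Strict Implicit. Unset Printing Implicit Defensive.
Import Order.TTheory GRing.Theory Num.Theory.

Section Aux.
Variables (R : realFieldType) (w : nat) (a : 'I_w -> R).

Definition valid (S : {set 'I_w}) (i : 'I_w) :=
  [&& incr_set a S, i \in S & [forall j in S, (j <= i)%N]].

Lemma RL_ge S (i : 'I_w) : valid S i -> #|S| <= RL a i.
Proof. by move=> H; rewrite /RL; apply: (@leq_bigmax_cond _ (fun S : {set 'I_w} => valid S i) (fun S => #|S|)) H. Qed.

Lemma valid1 (i : 'I_w) : valid [set i] i.
Proof.
apply/and3P; split; last 1 first.
- by apply/forall_inP => j; rewrite in_set1 => /eqP ->.
- by apply/forall_inP => j; rewrite in_set1 => /eqP ->; apply/forall_inP => k;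
     rewrite in_set1 => /eqP ->; rewrite ltnn.
- by rewrite in_set1.
Qed.

Lemma RL_ex (i : 'I_w) : exists S, valid S i /\ #|S| = RL a i.
Proof.
case: (@arg_maxnP _ [set i] (valid^~ i) (fun S => #|S|) (valid1 i)) => S HS Hmax.
exists S; split => //; apply/eqP; rewrite eqn_leq RL_ge // .
by apply/bigmax_leqP => T HT; apply: Hmax.
Qed.

Lemma RL_pos (i : 'I_w) : 0 < RL a i.
Proof. by have := RL_ge (valid1 i); rewrite cards1. Qed.

Lemma RL_step (j i : 'I_w) : (j < i)%N -> (a j <= a i)%R -> (RL a j).+1 <= RL a i.
Proof.
move=> ji aji; case: (RL_ex j) => S [/and3P [HS jS Sj] <-].
have iS : i \notin S.
  apply/negP => /(forall_inP Sj); by rewrite leqNgt ji.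
have -> : #|S|.+1 = #|i |: S| by rewrite cardsU1 iS.
apply: RL_ge; apply/and3P; split.
- apply/forall_inP => p; rewrite in_setU1 => /predU1P [-> | pS];
    apply/forall_inP => q; rewrite in_setU1 => /predU1P [-> | qS].
  + by rewrite ltnn.
  + apply/implyP => iq; have := forall_inP Sj q qS; rewrite leqNgt.
    by rewrite (ltn_trans ji iq).
  + apply/implyP => _; apply: le_trans aji.
    have := forall_inP Sj p pS; rewrite leq_eqVlt => /orP [/eqP/val_inj -> // |pj].
    by have := forall_inP (forall_inP HS p pS) j jS; rewrite pj.
  + exact: (forall_inP (forall_inP HS p pS) q qS).
- by rewrite setU11.
- apply/forall_inP => p; rewrite in_setU1 => /predU1P [-> // | pS].
  by apply: leq_trans (ltnW ji); exact: (forall_inP Sj p pS).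
Qed.


Lemma incr_setS (S T : {set 'I_w}) : S \subset T -> incr_set a T -> incr_set a S.
Proof.
move=> /subsetP ST HT; apply/forall_inP => p pS; apply/forall_inP => q qS.
exact: (forall_inP (forall_inP HT p (ST p pS)) q (ST q qS)).
Qed.

Lemma RL_pred (i : 'I_w) : 1 < RL a i ->
  exists j : 'I_w, [/\ (j < i)%N, (a j <= a i)%R & RL a j = (RL a i).-1].
Proof.
move=> H2; case: (RL_ex i) => S [/and3P [HS iS Si] HSc].
have cS' : #|S :\ i| = (RL a i).-1 by rewrite -HSc (cardsD1 i S) iS.
have : 0 < #|S :\ i| by rewrite cS'; case: (RL a i) H2 => [|[]].
case/card_gt0P => k0 k0S.
case: (@arg_maxnP _ k0 (mem (S :\ i)) (fun k : 'I_w => val k) k0S) => j jS jmax.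
have jSS : j \in S by move: (jS : j \in S :\ i); rewrite in_setD1 => /andP [].
have ji : (j < i)%N.
  move: (jS : j \in S :\ i); rewrite in_setD1 => /andP [jni _].
  rewrite ltn_neqAle (forall_inP Si j jSS) andbT.
  by apply: contra jni => /eqP H; apply/eqP/val_inj.
have aji : (a j <= a i)%R by have := forall_inP (forall_inP HS j jSS) i iS; rewrite ji.
exists j; split => //.
apply/eqP; rewrite eqn_leq; apply/andP; split.
  by have := RL_step ji aji; case: (RL a i).
rewrite -cS'; apply: RL_ge; apply/and3P; split => //.
- by apply: incr_setS HS; apply: subD1set.
- by apply/forall_inP => k kS; apply: jmax.
Qed.

Lemma RL_eq_lt (p q : 'I_w) : (p < q)%N -> RL a p = RL a q -> (a q < a p)%R.
Proof.
move=> pq e; rewrite ltNge; apply/negP => apq.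
by have := RL_step pq apq; rewrite e ltnn.
Qed.

Lemma un_spec (x y : 'I_w) : (y < x)%N -> RL a y = (RL a x).-1 ->
  [/\ (un a x < x)%N, RL a (un a x) = (RL a x).-1 & (y <= un a x)%N].
Proof.
move=> yx ey.
set P := fun k : 'I_w => (k < x)%N && (RL a k == (RL a x).-1).
have Py : P y by rewrite /P yx ey eqxx.
case: (@arg_maxnP _ y P (fun k : 'I_w => val k) Py) => z /andP [zx /eqP ez] zmax.
rewrite /un; case: pickP => [u /and3P [ux /eqP eu /forallP um] | Hn] /=.
- split => //.
  by have := um y; rewrite yx ey eqxx.
- by have := Hn z; rewrite zx ez eqxx /=; move/negbT/negP; case;
     apply/forallP => k; apply/implyP => Pk; apply: zmax.
Qed.


Lemma lm_spec (x y : 'I_w) : is_pred a y x ->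
  is_pred a (lm a x) x /\ forall k, is_pred a k x -> (lm a x <= k)%N.
Proof.
move=> Py.
case: (@arg_minnP _ y (fun k => is_pred a k x) (fun k : 'I_w => val k) Py) => z Pz zmin.
rewrite /lm; case: pickP => [u /andP [Pu /forallP um] | Hn] /=.
- by split => // k Pk; have := um k; rewrite Pk.
- have := Hn z; rewrite Pz /=; move/negbT/negP; case.
  by apply/forallP => k; apply/implyP => Pk; apply: zmin.
Qed.

Lemma RL2_pred (x : 'I_w) : 1 < RL a x -> exists y, is_pred a y x.
Proof.
move=> H; case: (RL_pred H) => y [yx ayx ey]; exists y.
by rewrite /is_pred /compatible yx ayx ey eqxx.
Qed.

Lemma sorted_rcons2 (T : Type) (e : rel T) s y x :
  sorted e (rcons (rcons s y) x) = sorted e (rcons s y) && e y x.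
Proof.
case: s => [|z s] //=; first by rewrite andbT.
by rewrite rcons_path last_rcons.
Qed.

Lemma incr_rcons2 s (y x : 'I_w) :
  incr_subseq a (rcons (rcons s y) x) =
  [&& incr_subseq a (rcons s y), (y < x)%N & (a y <= a x)%R].
Proof.
rewrite /incr_subseq !sorted_rcons2.
by case: (sorted _ _); case: (sorted _ _); case: (y < x)%N; case: (a y <= a x)%R.
Qed.

Lemma RL_chain n s (x : 'I_w) : incr_subseq a (rcons s x) -> size s = n -> n < RL a x.
Proof.
elim: n s x => [|n IH] s x; first by move=> _ _; apply: RL_pos.
case/lastP: s => [|s y] //; rewrite size_rcons => + [] sn.
rewrite incr_rcons2 => /and3P [Hs yx ayx].
by apply: leq_ltn_trans (RL_step yx ayx); apply: IH Hs sn.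
Qed.


Lemma head_rcons2 (T : Type) (x0 : T) s y x : head x0 (rcons (rcons s y) x) = head x0 (rcons s y).
Proof. by case: s. Qed.

Lemma chain_step s (y x : 'I_w) n : incr_subseq a (rcons (rcons s y) x) -> size s = n ->
  RL a x = n.+2 -> [/\ incr_subseq a (rcons s y), is_pred a y x & RL a y = n.+1].
Proof.
rewrite incr_rcons2 => /and3P [Hs yx ayx] sn ex.
have h1 := RL_chain Hs sn; have h2 := RL_step yx ayx.
have ey : RL a y = n.+1 by apply/eqP; rewrite eqn_leq h1 -ltnS -ex h2.
by split => //; rewrite /is_pred /compatible yx ayx ey ex eqxx.
Qed.

Lemma upper n s (x z x0 : 'I_w) : incr_subseq a (rcons s x) -> size s = n ->
  RL a x = n.+1 -> RL a z = n.+1 -> (x <= z)%N -> (head x0 (rcons s x) <= iter n (un a) z)%N.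
Proof.
elim: n s x z => [|n IH] s x z.
  by case: s => // _ _ _ _.
case/lastP: s => [|s y] //; rewrite size_rcons => Hs [] sn ex ez xz.
case: (chain_step Hs sn ex) => Hs' /andP [/andP [yx _] _] ey.
have [uz eu yu] := @un_spec z y (leq_trans yx xz) ltac:(by rewrite ey ez).
rewrite head_rcons2 iterSr; apply: IH => //; by rewrite eu ez.
Qed.

Lemma lower n s (x z x0 : 'I_w) : incr_subseq a (rcons s x) -> size s = n ->
  RL a x = n.+1 -> RL a z = n.+1 -> (z <= x)%N -> (iter n (lm a) z <= head x0 (rcons s x))%N.
Proof.
elim: n s x z => [|n IH] s x z.
  by case: s => // _ _ _ _.
case/lastP: s => [|s y] //; rewrite size_rcons => Hs [] sn ex ez zx.
case: (chain_step Hs sn ex) => Hs' Pyx ey.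
have [y' Py'] : exists y', is_pred a y' z by apply: RL2_pred; rewrite ez.
have [Plm lmin] := lm_spec Py'.
have elm : RL a (lm a z) = n.+1 by move: Plm => /andP [_ /eqP ->]; rewrite ez.
rewrite head_rcons2 iterSr; apply: IH => //.
move: zx; rewrite leq_eqVlt => /orP [/eqP e | zx].
  by apply: lmin; have -> : z = x by apply: val_inj.
case: (ltnP y z) => [yz | zy].
- apply: lmin; move: Pyx => /andP [/andP [_ ayx] _].
  rewrite /is_pred /compatible yz ey ez eqxx /= andbT.
  apply: le_trans ayx _; apply: ltW; apply: RL_eq_lt zx _; by rewrite ez ex.
- by move: Plm => /andP [/andP [lz _] _]; apply: ltnW; apply: leq_trans lz zy.
Qed.


Lemma chain_un n (x : 'I_w) : RL a x = n.+1 -> exists s,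
  [/\ incr_subseq a (rcons s x), size s = n & forall x0, head x0 (rcons s x) = iter n (un a) x].
Proof.
elim: n x => [|n IH] x ex.
  by exists [::]; split => //; rewrite /incr_subseq /=.
have [y [yx ayx ey]] : exists y : 'I_w, [/\ (y < x)%N, (a y <= a x)%R & RL a y = (RL a x).-1].
  by apply: RL_pred; rewrite ex.
have [ux eu yu] := un_spec yx ey.
have aux : (a (un a x) <= a x)%R.
  move: yu; rewrite leq_eqVlt => /orP [/eqP e | yu].
    by have <- : y = un a x by apply: val_inj.
  apply: le_trans ayx; apply: ltW; apply: RL_eq_lt yu _; by rewrite ey eu.
have [s [Hs sn hs]] := IH (un a x) ltac:(by rewrite eu ex).
exists (rcons s (un a x)); split.
- by rewrite incr_rcons2 Hs ux aux.
- by rewrite size_rcons sn.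
- by move=> x0; rewrite head_rcons2 hs iterSr.
Qed.

Lemma chain_lm n (x : 'I_w) : RL a x = n.+1 -> exists s,
  [/\ incr_subseq a (rcons s x), size s = n & forall x0, head x0 (rcons s x) = iter n (lm a) x].
Proof.
elim: n x => [|n IH] x ex.
  by exists [::]; split => //; rewrite /incr_subseq /=.
have [y Py] : exists y, is_pred a y x by apply: RL2_pred; rewrite ex.
have [/andP [/andP [lx alx] /eqP el] _] := lm_spec Py.
have [s [Hs sn hs]] := IH (lm a x) ltac:(by rewrite el ex).
exists (rcons s (lm a x)); split.
- by rewrite incr_rcons2 Hs lx alx.
- by rewrite size_rcons sn.
- by move=> x0; rewrite head_rcons2 hs iterSr.
Qed.

Lemma width_rcons s (x : 'I_w) : width (rcons s x) = (x - head x (rcons s x))%N.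
Proof. by case: s => [|y s] /=; rewrite ?subnn // last_rcons. Qed.

End Aux.

Theorem mainTheorem11 (R : realFieldType) (w : nat) (a : 'I_w -> R)
  (m : nat) (i : 'I_w)
  (Hlists : forall t : nat, (exists j : 'I_w, RL a j = t) <-> (1 <= t <= m)%N)
  (Hi : RL a i = m) :
  (forall s : seq 'I_w, incr_subseq a s -> size s = m -> last i s = i ->
     (iter m.-1 (lm a) i <= head i s <= iter m.-1 (un a) i)%N)
  /\ (exists s : seq 'I_w, [/\ incr_subseq a s, size s = m, last i s = i,
        head i s = iter m.-1 (lm a) i &
        forall s' : seq 'I_w, incr_subseq a s' -> size s' = m -> last i s' = i ->
          (width s' <= width s)%N])
  /\ (exists s : seq 'I_w, [/\ incr_subseq a s, size s = m, last i s = i,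
        head i s = iter m.-1 (un a) i &
        forall s' : seq 'I_w, incr_subseq a s' -> size s' = m -> last i s' = i ->
          (width s <= width s')%N]).
Proof.
have em : m = m.-1.+1 by rewrite -Hi prednK // RL_pos.
have P1 : forall s : seq 'I_w, incr_subseq a s -> size s = m -> last i s = i ->
     (iter m.-1 (lm a) i <= head i s <= iter m.-1 (un a) i)%N.
  move=> s; case/lastP: s => [|s x]; first by move=> _ /= m0; move: em; rewrite -m0.
  rewrite last_rcons size_rcons => Hs sm ex; subst x.
  have sn : size s = m.-1 by rewrite em in sm; case: sm.
  rewrite (@lower _ _ a _ _ i i i Hs sn) ?Hi //= (@upper _ _ a _ _ i i i Hs sn) ?Hi //.
have wid : forall s : seq 'I_w, size s = m -> last i s = i ->
    width s = (i - head i s)%N.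
  move=> s; case/lastP: s => [|s x]; first by move=> /= m0; move: em; rewrite -m0.
  by rewrite last_rcons => _ ->; rewrite width_rcons; case: s.
split; first exact: P1.
split.
  have [s [Hs sn hs]] := chain_lm (etrans Hi em).
  have ss : size (rcons s i) = m by rewrite size_rcons sn -em.
  exists (rcons s i); split => //; first by rewrite last_rcons.
  move=> s' Hs' s'm ls'; rewrite (wid _ s'm ls') (wid _ ss (last_rcons _ _ _)).
  by apply: leq_sub2l; rewrite hs; case/andP: (P1 _ Hs' s'm ls').
have [s [Hs sn hs]] := chain_un (etrans Hi em).
have ss : size (rcons s i) = m by rewrite size_rcons sn -em.
exists (rcons s i); split => //; first by rewrite last_rcons.
move=> s' Hs' s'm ls'; rewrite (wid _ s'm ls') (wid _ ss (last_rcons _ _ _)).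
by apply: leq_sub2l; rewrite hs; case/andP: (P1 _ Hs' s'm ls').
Qed.
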